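(* Let $n$ and $d$ be positive integers. Suppose there is a prime $q$ with $n/(d+1)<q<n/d$ and a prime power $p^a$ ($p$ prime, $a\ge1$) dividing $n$ such that $n-dq<p^a$. Then $n$ satisfies the $N$-variation of Condition 1 with $N=2+\lfloor d/2\rfloor$.
   Context: A positive integer $n$ satisfies the $N$-variation of Condition 1 if there exist $N$ different primes $p_1,\dots,p_N$ such that for every $1\le k\le n-1$, $\binom{n}{k}$ is divisible by at least one of $p_1,\dots,p_N$. *)

(* Defs.v *)
From mathcomp Require Import all_boot.
Set Implicit Arguments. Unset Strict Implicit. Unset Printing Implicit Defensive.

Definition condition1_var (N n : nat) : Prop :=
  exists ps : seq nat,
    [/\ size ps = N, uniq ps, all prime ps &
        forall k, 1 <= k <= n.-1 -> has (fun p => p %| 'C(n, k)) ps].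

(* Main.v *)
Require Import Defs.
From mathcomp Require Import all_boot.
From mathcomp Require Import zify.

Lemma fact_log q m N : prime q -> m <= N ->
  logn q m`! = \sum_(1 <= t < N.+1) m %/ q ^ t.
Proof.
move=> Hq HmN; rewrite logn_fact // [RHS](@big_cat_nat _ _ _ m.+1) //=.
rewrite -[LHS]addn0; congr (_ + _); symmetry.
rewrite big_nat_cond big1 // => t /andP[/andP[Ht _] _].
apply: divn_small; apply: leq_trans Ht _ .
exact: ltnW (ltn_expl _ (prime_gt1 Hq)).
Qed.

Lemma q_dvd_bin q n k : prime q -> k <= n -> n %% q < k %% q -> q %| 'C(n, k).
Proof.
move=> Hq Hk Hmod.
have q0 : 0 < q by exact: prime_gt0.
have Hf := bin_fact Hk.
have HL : logn q n`! = logn q 'C(n, k) + (logn q k`! + logn q (n - k)`!).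
  by rewrite -Hf !lognM ?fact_gt0 ?muln_gt0 ?fact_gt0 ?bin_gt0.
have kpos : 0 < n.
  case: n Hk Hmod {Hf HL} => [|//]; rewrite leqn0 => /eqP ->; by rewrite mod0n.
move: HL; rewrite !(fact_log q _ n) // ?leq_subr //.
rewrite (big_ltn (F := fun i => n %/ q ^ i)) // (big_ltn (F := fun i => k %/ q ^ i)) //.
rewrite (big_ltn (F := fun i => (n - k) %/ q ^ i)) // !expn1.
have H1 : k %/ q + (n - k) %/ q < n %/ q.
  have -> : n %/ q = (k + (n - k)) %/ q by rewrite subnKC.
  rewrite divnD //.
  have -> : (q <= k %% q + (n - k) %% q) = true.
    rewrite leqNgt; apply/negP => Hs.
    move: Hmod; have -> : n %% q = (k %% q + (n - k) %% q) %% q.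
      by rewrite modnDm subnKC.
    by rewrite modn_small // ltnNge leq_addr.
  by rewrite addn1.
have H2 : \sum_(2 <= i < n.+1) k %/ q ^ i + \sum_(2 <= i < n.+1) (n - k) %/ q ^ i
          <= \sum_(2 <= i < n.+1) n %/ q ^ i.
  rewrite -big_split /=; apply: leq_sum => t _.
  have -> : n %/ q ^ t = (k + (n - k)) %/ q ^ t by rewrite subnKC.
  by rewrite divnD ?expn_gt0 ?q0 // leq_addr.
move=> HL.
have : 1 <= logn q 'C(n, k).
  move: H1 H2 HL.
  move: (n %/ q) (k %/ q) ((n - k) %/ q) (\sum_(2 <= i < n.+1) n %/ q ^ i)
    (\sum_(2 <= i < n.+1) k %/ q ^ i) (\sum_(2 <= i < n.+1) (n - k) %/ q ^ i)
    (logn q 'C(n, k)).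
  move=> *; lia.
by move=> h; rewrite -[q]expn1 pfactor_dvdn // bin_gt0.
Qed.

Lemma p_dvd_bin p a n k : prime p -> 0 < a -> p ^ a %| n -> ~~ (p ^ a %| k) ->
  p %| 'C(n, k).
Proof.
move=> Hp Ha Hn Hk; case Hc: (p %| 'C(n, k)) => //; exfalso; move/negP: Hk; apply.
have Hcop : coprime (p ^ a) 'C(n, k) by rewrite coprime_pexpl // prime_coprime // Hc.
case: k Hc Hcop => [|k] Hc Hcop; first exact: dvdn0.
rewrite -(Gauss_dvdr _ Hcop) mulnC -mul_bin_diag.
exact: dvdn_mulr.
Qed.

Lemma bin_gt1 n k : 0 < k -> k < n -> 1 < 'C(n, k).
Proof.
case: n => [//|n]; case: k => [//|k] _ Hk.
rewrite binS; have h1 : 0 < 'C(n, k.+1) by rewrite bin_gt0.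
have h2 : 0 < 'C(n, k) by rewrite bin_gt0 ltnW.
lia.
Qed.

Lemma in_le_sumn (s : seq nat) x : x \in s -> x <= sumn s.
Proof.
elim: s => [//|y s IH]; rewrite in_cons => /orP[/eqP ->|/IH h] /=.
  exact: leq_addr.
exact: leq_trans h (leq_addl _ _).
Qed.

Lemma pad m (s : seq nat) : uniq s -> all prime s ->
  exists t : seq nat, [/\ size t = size s + m, uniq t, all prime t & {subset s <= t}].
Proof.
elim: m s => [|m IH] s Hu Ha.
  by exists s; rewrite addn0; split.
case: (prime_above (sumn s)) => x Hx Hpx.
have Hxs : x \notin s.
  apply/negP => /in_le_sumn; rewrite leqNgt Hx //.
have [|//|t [H1 H2 H3 H4]] := IH (x :: s); first by rewrite /= Hxs Hu.
  by rewrite /= Hpx Ha.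
exists t; split => //; first by rewrite H1 /= addSnnS.
by move=> y Hy; apply: H4; rewrite in_cons Hy orbT.
Qed.

Ltac clean := repeat match goal with
  | H : context[_ %/ _] |- _ => clear H
  | H : context[_ %% _] |- _ => clear H end.
Ltac nlia := clean; lia.

(* n/(d+1) < q < n/d is written over nat as n < (d+1)*q and d*q < n. *)
Theorem mainTheorem14 (n d q p a : nat) :
  0 < n -> 0 < d ->
  prime q -> n < d.+1 * q -> d * q < n ->
  prime p -> 0 < a -> p ^ a %| n -> n - d * q < p ^ a ->
  condition1_var (2 + d./2) n.
Proof.
move=> Hn Hd Hq Hlt Hgt Hp Ha HPn Hr.
set r := n - d * q in Hr.
set P := p ^ a in HPn Hr.
have q0 : 0 < q by exact: prime_gt0.
have P0 : 0 < P by rewrite expn_gt0 prime_gt0.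
have En : n = d * q + r by rewrite /r; nlia.
have rq : r < q by move: Hlt; rewrite mulSn; nlia.
have nmod : n %% q = r by rewrite En modnMDl modn_small.
pose kk i := ((i * q + r) %/ P) * P.
pose s i := if prime (pdiv 'C(n, kk i)) then pdiv 'C(n, kk i) else q.
pose S := undup (q :: p :: map s (iota 1 d./2)).
have SU : uniq S by exact: undup_uniq.
have SP : all prime S.
  apply/allP => x; rewrite mem_undup in_cons => /orP[/eqP -> //|].
  rewrite in_cons => /orP[/eqP -> //|/mapP [i _ ->]].
  by rewrite /s; case: ifP.
have Ssize : size S <= 2 + d./2.
  by rewrite /S (leq_trans (size_undup _)) //= size_map size_iota.
have [t [T1 T2 T3 T4]] := @pad (2 + d./2 - size S) S SU SP.
exists t; split => //; first by rewrite T1 subnKC.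
have Hhalf := odd_double_half d.
have block : forall k, 0 < k < n -> k %% q <= r -> P %| k ->
    1 <= k %/ q <= d./2 -> exists2 x, x \in S & x %| 'C(n, k).
  move=> k /andP[k0 kn] kr Pk /andP[i1 i2].
  set i := k %/ q in i1 i2.
  have Ek : k = i * q + k %% q by rewrite /i -divn_eq.
  clearbody i.
  move: Ek kr; move: (k %% q) => j Ek kr.
  have Hkk : kk i = k.
    case/dvdnP: Pk => m Em.
    have h1 : m <= (i * q + r) %/ P by rewrite leq_divRL // -Em; nlia.
    have h2 : kk i <= i * q + r by rewrite /kk leq_divM.
    have h3 : m * P <= kk i by rewrite /kk leq_pmul2r.
    have h4 : (i * q + r) %/ P < m.+1.
      rewrite ltn_divLR //; nlia.
    by rewrite /kk; apply/eqP; rewrite Em eqn_pmul2r // eqn_leq -ltnS h4 h1.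
  have Hs : s i = pdiv 'C(n, k).
    by rewrite /s Hkk pdiv_prime // bin_gt1.
  exists (s i); last by rewrite Hs pdiv_dvd.
  rewrite mem_undup !in_cons; apply/orP; right; apply/orP; right.
  by apply: map_f; rewrite mem_iota; nlia.
move=> k /andP[k1 kn].
have kn' : k < n by nlia.
suff [x xS xd] : exists2 x, x \in S & x %| 'C(n, k).
  by apply/hasP; exists x => //; apply: T4.
case: (ltnP r (k %% q)) => Hj.
  exists q; first by rewrite mem_undup mem_head.
  by apply: q_dvd_bin => //; [nlia | rewrite nmod].
case: (boolP (P %| k)) => Pk; last first.
  exists p; first by rewrite mem_undup !in_cons eqxx orbT.
  exact: (@p_dvd_bin p a n k Hp Ha HPn Pk).
set i := k %/ q.
set j := k %% q in Hj.
have Ek : k = i * q + j by rewrite /i /j -divn_eq.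
have Hid : k %/ q = i by [].
have Hjd : k %% q = j by [].
clearbody i j.
have i0 : 0 < i.
  rewrite lt0n; apply/negP => /eqP i0.
  have := dvdn_leq k1 Pk; rewrite Ek i0 mul0n add0n; nlia.
have id : i <= d.
  rewrite -ltnS -(ltn_pmul2r q0); nlia.
have iqdq : i * q <= d * q by rewrite leq_pmul2r.
have id' : i < d.
  rewrite ltn_neqAle id andbT; apply/negP => /eqP Eid.
  have Pnk : P %| n - k by rewrite dvdn_sub.
  have h0 : 0 < n - k by nlia.
  have := dvdn_leq h0 Pnk.
  rewrite Ek Eid; nlia.
case: (leqP i d./2) => Hi.
  by apply: block; rewrite ?Hid ?Hjd ?k1 ?kn' ?i0 ?Hi.
have Ek' : n - k = (d - i) * q + (r - j).
  rewrite mulnBl; nlia.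
have Hdiv : (n - k) %/ q = d - i.
  by rewrite Ek' divnMDl // divn_small ?addn0 //; nlia.
have Hmod : (n - k) %% q = r - j.
  by rewrite Ek' modnMDl modn_small //; nlia.
rewrite -bin_sub; last by nlia.
apply: block.
- apply/andP; split; nlia.
- rewrite Hmod; nlia.
- by rewrite dvdn_sub.
- rewrite Hdiv; apply/andP; split; nlia.
Qed.
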